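(* Under the hypotheses of Theorem 3 (with $F_1,F_2$ defined from the given code and from $\beta_1,\beta_2,\lambda_1,\lambda_2,\nu_1$ satisfying $\Sigma_1\le1$, $\Sigma_2\le1$ everywhere), for all $\gamma_1,\gamma_2>0$, $$\epsilon_1\ge\mathbb P[F_1\ge\log M_1+\gamma_1]-e^{-\gamma_1},\qquad \epsilon_2\ge\mathbb P[F_2\ge\log M_2+\gamma_2]-e^{-\gamma_2}.$$
   Context: Setting: $X$ with law $P_X$ on $\mathcal X$; measurable distortion measures $\mathsf d_1\colon\mathcal X\times\mathcal Y_1\to[0,\infty)$, $\mathsf d_2\colon\mathcal X\times\mathcal Y_2\to[0,\infty)$ (all $\sigma$-algebras containing singletons). For measurable $\beta_1\colon\mathcal X\to(0,\infty)$, $\beta_2\colon\mathcal X\times\mathcal Y_1\to(0,\infty)$ and $\lambda_1,\lambda_2,\nu_1\ge0$, $\Sigma_2(y_1,y_2)=\mathbb E\big[\exp(-\frac{\lambda_1}{1+\nu_1}\mathsf d_1(X,y_1)-\lambda_2\mathsf d_2(X,y_2))/(\beta_1(X)\beta_2(X|y_1)^{\nu_1/(1+\nu_1)})\big]$ and $\Sigma_1(y_1)=\mathbb E\big[\exp(-\frac{\lambda_1}{1+\nu_1}\mathsf d_1(X,y_1))\beta_2(X|y_1)^{1/(1+\nu_1)}/\beta_1(X)\big]$. An $(M_1,M_2,d_1,d_2,\epsilon_1,\epsilon_2)$ code: possibly randomized encoders $P_{W_1|X}$ into $\{1,\dots,M_1\}$, $P_{W_2|XW_1}$ into $\{1,\dots,\lfloor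 M_2/M_1\rfloor\}$ and decoders $P_{Y_1|W_1}$, $P_{Y_2|W_1W_2}$, with $\mathcal A_1=\{\mathsf d_1(X,Y_1)\le d_1\}$, $\mathcal A_2=\mathcal A_1\cap\{\mathsf d_2(X,Y_2)\le d_2\}$, $\mathbb P[\mathcal A_1^c]\le\epsilon_1$, $\mathbb P[\mathcal A_2^c]\le\epsilon_2$. $F_1=\log\frac{\beta_2(X|Y_1)^{1/(1+\nu_1)}}{\beta_1(X)}-\frac{\lambda_1}{1+\nu_1}d_1$, $F_2=\log\frac{\beta_2(X|Y_1)^{-\nu_1/(1+\nu_1)}}{\beta_1(X)}-\frac{\lambda_1}{1+\nu_1}d_1-\lambda_2d_2$. *)

(* Defs.v *)
From HB Require Import structures.
From mathcomp Require Import all_boot all_order all_algebra.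
From mathcomp Require Import all_classical all_reals all_analysis.
Set Implicit Arguments. Unset Strict Implicit. Unset Printing Implicit Defensive.
Import Order.TTheory GRing.Theory Num.Theory.
Local Open Scope classical_set_scope.
Local Open Scope ring_scope.

(* Joint law of (X, Y1, Y2) induced by a successive-refinement code:
   P_X P_{W1|X} P_{W2|X W1} P_{Y1|W1} P_{Y2|W1 W2}, where
   f1 w1 x = P_{W1|X}(w1|x), f2 w1 w2 x = P_{W2|X W1}(w2|x,w1),
   g1 w1 = P_{Y1|W1=w1}, g2 w1 w2 = P_{Y2|W1=w1,W2=w2}. *)
Definition joint_prob (R : realType) (d dy1 dy2 : measure_display)
  (TX : measurableType d) (TY1 : measurableType dy1) (TY2 : measurableType dy2)
  (PX : probability TX R) (M1 K : nat)
  (f1 : 'I_M1 -> TX -> R) (f2 : 'I_M1 -> 'I_K -> TX -> R)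
  (g1 : 'I_M1 -> probability TY1 R) (g2 : 'I_M1 -> 'I_K -> probability TY2 R)
  (A : set (TX * TY1 * TY2)) : \bar R :=
  (\int[PX]_x \sum_(w1 < M1) \sum_(w2 < K)
     ((f1 w1 x * f2 w1 w2 x)%:E *
      \int[g1 w1]_y1 \int[g2 w1 w2]_y2 (\1_A (x, y1, y2))%:E))%E.

Definition Sigma1 (R : realType) (d dy1 : measure_display)
  (TX : measurableType d) (TY1 : measurableType dy1) (PX : probability TX R)
  (ds1 : TX * TY1 -> R) (beta1 : TX -> R) (beta2 : TX * TY1 -> R)
  (lam1 nu1 : R) (y1 : TY1) : \bar R :=
  (\int[PX]_x (expR (- (lam1 / (1 + nu1)) * ds1 (x, y1))
               * beta2 (x, y1) `^ (1 / (1 + nu1)) / beta1 x)%:E)%E.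

Definition Sigma2 (R : realType) (d dy1 dy2 : measure_display)
  (TX : measurableType d) (TY1 : measurableType dy1) (TY2 : measurableType dy2)
  (PX : probability TX R)
  (ds1 : TX * TY1 -> R) (ds2 : TX * TY2 -> R) (beta1 : TX -> R) (beta2 : TX * TY1 -> R)
  (lam1 lam2 nu1 : R) (y1 : TY1) (y2 : TY2) : \bar R :=
  (\int[PX]_x (expR (- (lam1 / (1 + nu1)) * ds1 (x, y1) - lam2 * ds2 (x, y2))
               / (beta1 x * beta2 (x, y1) `^ (nu1 / (1 + nu1))))%:E)%E.

Definition F1 (R : realType) (TX TY1 : Type) (beta1 : TX -> R) (beta2 : TX * TY1 -> R)
  (lam1 nu1 dd1 : R) (x : TX) (y1 : TY1) : R :=
  ln (beta2 (x, y1) `^ (1 / (1 + nu1)) / beta1 x) - lam1 / (1 + nu1) * dd1.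

Definition F2 (R : realType) (TX TY1 : Type) (beta1 : TX -> R) (beta2 : TX * TY1 -> R)
  (lam1 lam2 nu1 dd1 dd2 : R) (x : TX) (y1 : TY1) : R :=
  ln (beta2 (x, y1) `^ (- (nu1 / (1 + nu1))) / beta1 x)
  - lam1 / (1 + nu1) * dd1 - lam2 * dd2.

(* Main.v *)
Require Import Defs.
From HB Require Import structures.
From mathcomp Require Import all_boot all_order all_algebra.
From mathcomp Require Import all_classical all_reals all_analysis.
From mathcomp Require Import measurable_realfun.
From mathcomp Require Import lra.
Import Order.TTheory GRing.Theory Num.Theory.
Local Open Scope classical_set_scope.
Local Open Scope ring_scope.
Set Implicit Arguments. Unset Strict Implicit. Unset Printing Implicit Defensive.

Local Open Scope ereal_scope.

Lemma le_int_ge0 (R : realType) d (T : measurableType d) (mu : {measure set T -> \bar R})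
  (f g : T -> \bar R) : (forall x, 0 <= f x) -> (forall x, f x <= g x) ->
  \int[mu]_x f x <= \int[mu]_x g x.
Proof.
move=> f0 fg.
have g0 x : 0 <= g x by exact: le_trans (f0 x) (fg x).
rewrite (ge0_integralTE mu f0) (ge0_integralTE mu g0).
apply: ereal_sup_le => _ [h hf <-]; exists h => //= x.
exact: le_trans (hf x) (fg x).
Qed.

Section J.
Context (R : realType) (d dy1 dy2 : measure_display)
  (TX : measurableType d) (TY1 : measurableType dy1) (TY2 : measurableType dy2)
  (PX : probability TX R) (M1 K : nat)
  (f1 : 'I_M1 -> TX -> R) (f2 : 'I_M1 -> 'I_K -> TX -> R)
  (g1 : 'I_M1 -> probability TY1 R) (g2 : 'I_M1 -> 'I_K -> probability TY2 R).
Hypotheses (hf1m : forall w1, measurable_fun setT (f1 w1))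
  (hf1 : forall w1 x, (0 <= f1 w1 x)%R)
  (hf2m : forall w1 w2, measurable_fun setT (f2 w1 w2))
  (hf2 : forall w1 w2 x, (0 <= f2 w1 w2 x)%R)
  (hf1s : forall x, (\sum_(w1 < M1) f1 w1 x)%R = 1%R)
  (hf2s : forall w1 x, (\sum_(w2 < K) f2 w1 w2 x)%R = 1%R).

Definition J (h : TX * TY1 * TY2 -> R) : \bar R :=
  \int[PX]_x \sum_(w1 < M1) \sum_(w2 < K)
     ((f1 w1 x * f2 w1 w2 x)%:E *
      \int[g1 w1]_y1 \int[g2 w1 w2]_y2 (h (x, y1, y2))%:E).

Lemma JE A : joint_prob PX f1 f2 g1 g2 A = J (\1_A).
Proof. by []. Qed.

Lemma meas_inner (h : TX * TY1 * TY2 -> R) (mh : measurable_fun setT h)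
  (h0 : forall p, (0 <= h p)%R) w1 w2 :
  measurable_fun setT (fun x : TX => (\int[g1 w1]_y1 \int[g2 w1 w2]_y2 (h (x, y1, y2))%:E : \bar R)).
Proof.
have m2 : measurable_fun setT (fun p : TX * TY1 => \int[g2 w1 w2]_y2 (h (p, y2))%:E).
  apply: (measurable_fun_fubini_tonelli_F (fun q => (h q)%:E)).
    exact/measurable_EFinP.
  by move=> q; rewrite lee_fin.
apply: (measurable_fun_fubini_tonelli_F (fun p : TX * TY1 => \int[g2 w1 w2]_y2 (h (p, y2))%:E)) => //.
by move=> q; apply: integral_ge0 => y _; rewrite lee_fin.
Qed.

Lemma meas_outer (h : TX * TY1 * TY2 -> R) (mh : measurable_fun setT h)
  (h0 : forall p, (0 <= h p)%R) :
  measurable_fun setT (fun x : TX => (\sum_(w1 < M1) \sum_(w2 < K)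
     ((f1 w1 x * f2 w1 w2 x)%:E *
      \int[g1 w1]_y1 \int[g2 w1 w2]_y2 (h (x, y1, y2))%:E) : \bar R)).
Proof.
apply: emeasurable_sum => w1; apply: emeasurable_sum => w2.
apply: emeasurable_funM; last exact: meas_inner.
apply/measurable_EFinP; exact: measurable_funM.
Qed.

Lemma integrand_ge0 (h : TX * TY1 * TY2 -> R) (h0 : forall p, (0 <= h p)%R) x :
  0 <= \sum_(w1 < M1) \sum_(w2 < K)
     ((f1 w1 x * f2 w1 w2 x)%:E *
      \int[g1 w1]_y1 \int[g2 w1 w2]_y2 (h (x, y1, y2))%:E).
Proof.
apply: sume_ge0 => w1 _; apply: sume_ge0 => w2 _; apply: mule_ge0.
  by rewrite lee_fin mulr_ge0.
apply: integral_ge0 => y1 _; apply: integral_ge0 => y2 _; by rewrite lee_fin.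
Qed.

Lemma J_sub (h h1 h2 : TX * TY1 * TY2 -> R) (h0 : forall p, (0 <= h p)%R)
  (mh1 : measurable_fun setT h1) (h10 : forall p, (0 <= h1 p)%R)
  (mh2 : measurable_fun setT h2) (h20 : forall p, (0 <= h2 p)%R)
  (hle : forall p, (h p <= h1 p + h2 p)%R) : J h <= J h1 + J h2.
Proof.
have h120 p : (0 <= h1 p + h2 p)%R by rewrite addr_ge0.
apply: (@le_trans _ _ (J (fun p => h1 p + h2 p)%R)).
  apply: le_int_ge0; first exact: integrand_ge0.
  move=> x; apply: lee_sum => w1 _; apply: lee_sum => w2 _.
  apply: lee_wpmul2l; first by rewrite lee_fin mulr_ge0.
  apply: le_int_ge0.
    by move=> y1; apply: integral_ge0 => y2 _; rewrite lee_fin.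
  move=> y1; apply: le_int_ge0; first by move=> y2; rewrite lee_fin.
  by move=> y2; rewrite lee_fin.
rewrite /J -ge0_integralD //; last 4 first.
- by move=> x _; exact: integrand_ge0.
- exact: meas_outer.
- by move=> x _; exact: integrand_ge0.
- exact: meas_outer.
rewrite le_eqVlt; apply/orP; left; apply/eqP.
apply: eq_integral => x _; rewrite -big_split; apply: eq_bigr => w1 _.
rewrite -big_split; apply: eq_bigr => w2 _ /=.
rewrite -ge0_muleDr; last 2 first.
- by apply: integral_ge0 => y1 _; apply: integral_ge0 => y2 _; rewrite lee_fin.
- by apply: integral_ge0 => y1 _; apply: integral_ge0 => y2 _; rewrite lee_fin.
congr (_ * _).
have mi (k : TX * TY1 * TY2 -> R) : measurable_fun setT k -> (forall p, (0 <= k p)%R) ->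
   measurable_fun setT (fun y1 : TY1 => (\int[g2 w1 w2]_y2 (k (x, y1, y2))%:E : \bar R)).
  move=> mk k0.
  have m2 : measurable_fun setT (fun p : TX * TY1 => \int[g2 w1 w2]_y2 (k (p, y2))%:E).
    apply: (measurable_fun_fubini_tonelli_F (fun q => (k q)%:E)).
      exact/measurable_EFinP.
    by move=> q; rewrite lee_fin.
  exact: (measurable_fun_pair2 x m2).
rewrite -ge0_integralD //; last 4 first.
- by move=> y1 _; apply: integral_ge0 => y2 _; rewrite lee_fin.
- exact: mi.
- by move=> y1 _; apply: integral_ge0 => y2 _; rewrite lee_fin.
- exact: mi.
apply: eq_integral => y1 _.
rewrite -ge0_integralD //; last 4 first.
- by move=> y2 _; rewrite lee_fin.
- apply/measurable_EFinP; exact: (measurable_fun_pair2 (x, y1) mh1).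
- by move=> y2 _; rewrite lee_fin.
- apply/measurable_EFinP; exact: (measurable_fun_pair2 (x, y1) mh2).
all: try by apply: eq_integral => y2 _; rewrite EFinD.
Qed.

Lemma f1_le1 w1 x : (f1 w1 x <= 1)%R.
Proof.
rewrite -(hf1s x) (bigD1 w1) //= lerDl; apply: sumr_ge0 => i _; exact: hf1.
Qed.

Lemma f2_le1 w1 w2 x : (f2 w1 w2 x <= 1)%R.
Proof.
rewrite -(hf2s w1 x) (bigD1 w2) //= lerDl; apply: sumr_ge0 => i _; exact: hf2.
Qed.

Lemma int_cst1 d0 (T : measurableType d0) (P : probability T R) (r : \bar R) :
  \int[P]_y r = r.
Proof. rewrite integral_cst //. transitivity (r * 1); last exact: mule1. congr (_ * _); exact: probability_setT. Qed.

Lemma J_bound1 (e : TX * TY1 -> R) (me : measurable_fun setT e)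
  (e0 : forall q, (0 <= e q)%R) (b : R)
  (hb : forall y1, \int[PX]_x (e (x, y1))%:E <= b%:E) :
  J (fun p => e p.1) <= (M1%:R * b)%:E.
Proof.
have mG w1 : measurable_fun setT (fun x : TX => (\int[g1 w1]_y1 (e (x, y1))%:E : \bar R)) by
  apply: (measurable_fun_fubini_tonelli_F (fun q => (e q)%:E));
  [exact/measurable_EFinP | by move=> q; rewrite lee_fin].
apply: (@le_trans _ _ (\int[PX]_x \sum_(w1 < M1) \int[g1 w1]_y1 (e (x, y1))%:E)).
  apply: le_int_ge0; first by move=> x; exact: (integrand_ge0 (fun p => e0 p.1)).
  move=> x; apply: lee_sum => w1 _.
  set G := \int[g1 w1]_y1 (e (x, y1))%:E.
  have G0 : 0 <= G by apply: integral_ge0 => y1 _; rewrite lee_fin.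
  have -> : \sum_(w2 < K) ((f1 w1 x * f2 w1 w2 x)%:E *
      \int[g1 w1]_y1 \int[g2 w1 w2]_y2 (e (x, y1, y2).1)%:E) = (f1 w1 x)%:E * G.
    transitivity (\sum_(w2 < K) ((f1 w1 x * f2 w1 w2 x)%:E * G)).
      apply: eq_bigr => w2 _; congr (_ * _); apply: eq_integral => y1 _.
      exact: (int_cst1 (g2 w1 w2) (e (x, y1))%:E).
    rewrite -ge0_sume_distrl; last by move=> w2 _; rewrite lee_fin mulr_ge0.
    by rewrite sumEFin -mulr_sumr hf2s mulr1.
  rewrite -[X in _ <= X]mul1e; apply: lee_wpmul2r => //.
  by rewrite lee_fin f1_le1.
rewrite ge0_integral_sum //; last first.
  by move=> w1 x _; apply: integral_ge0 => y1 _; rewrite lee_fin.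
apply: (@le_trans _ _ (\sum_(w1 < M1) b%:E)); last first.
  by rewrite sumEFin sumr_const card_ord mulr_natl.
apply: lee_sum => w1 _.
have E := fubini_tonelli (m1 := PX) (m2 := g1 w1) (fun q => (e q)%:E).
rewrite E; last 2 first.
- exact/measurable_EFinP.
- by move=> q; rewrite lee_fin.
rewrite -[X in _ <= X](int_cst1 (g1 w1)).
apply: le_int_ge0 => // y1.
by apply: integral_ge0 => x _; rewrite lee_fin.
Qed.

Lemma J_bound2 (e : TX * TY1 * TY2 -> R) (me : measurable_fun setT e)
  (e0 : forall q, (0 <= e q)%R) (b : R)
  (hb : forall y1 y2, \int[PX]_x (e (x, y1, y2))%:E <= b%:E) :
  J e <= (M1%:R * K%:R * b)%:E.
Proof.
apply: (@le_trans _ _ (\int[PX]_x \sum_(w1 < M1) \sum_(w2 < K)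
   \int[g1 w1]_y1 \int[g2 w1 w2]_y2 (e (x, y1, y2))%:E)).
  apply: le_int_ge0; first by move=> x; exact: (integrand_ge0 e0).
  move=> x; apply: lee_sum => w1 _; apply: lee_sum => w2 _.
  rewrite -[X in _ <= X]mul1e; apply: lee_wpmul2r.
    by apply: integral_ge0 => y1 _; apply: integral_ge0 => y2 _; rewrite lee_fin.
  by rewrite lee_fin mulr_ile1 // ?f1_le1 ?f2_le1.
have H0 w1 w2 x : 0 <= \int[g1 w1]_y1 \int[g2 w1 w2]_y2 (e (x, y1, y2))%:E.
  by apply: integral_ge0 => y1 _; apply: integral_ge0 => y2 _; rewrite lee_fin.
rewrite ge0_integral_sum //; last 2 first.
- move=> w1; apply: emeasurable_sum => w2; exact: meas_inner.
- by move=> w1 x _; apply: sume_ge0 => w2 _.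
apply: (@le_trans _ _ (\sum_(w1 < M1) \sum_(w2 < K) b%:E)); last first.
  under eq_bigr do rewrite sumEFin.
  rewrite sumEFin lee_fin.
  by rewrite sumr_const card_ord sumr_const card_ord -[((b *+ K) *+ M1)%R]mulr_natl -[(b *+ K)%R]mulr_natl mulrA.
apply: lee_sum => w1 _.
rewrite ge0_integral_sum //; try (by move=> w2; exact: meas_inner); try (by move=> w2 x _).
apply: lee_sum => w2 _.
have m2 : measurable_fun setT (fun p : TX * TY1 => \int[g2 w1 w2]_y2 (e (p, y2))%:E).
  apply: (measurable_fun_fubini_tonelli_F (fun q => (e q)%:E)).
    exact/measurable_EFinP.
  by move=> q; rewrite lee_fin.
have E := fubini_tonelli (m1 := PX) (m2 := g1 w1)
  (fun p : TX * TY1 => \int[g2 w1 w2]_y2 (e (p, y2))%:E) m2.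
rewrite E; last by move=> q; apply: integral_ge0 => y2 _; rewrite lee_fin.
rewrite -[X in _ <= X](int_cst1 (g1 w1)).
apply: le_int_ge0.
  by move=> y1; apply: integral_ge0 => x _; apply: integral_ge0 => y2 _; rewrite lee_fin.
move=> y1.
pose f := fun q : TX * TY2 => (e (q.1, y1, q.2))%:E.
have mf : measurable_fun setT f.
  apply/measurable_EFinP; apply: measurableT_comp me _.
  apply: measurable_fun_pair; last exact: measurable_snd.
  by apply: measurable_fun_pair; [exact: measurable_fst | exact: measurable_cst].
have E2 := fubini_tonelli (m1 := PX) (m2 := g2 w1 w2) f mf.
rewrite /f /= in E2.
rewrite E2; last by move=> q; rewrite lee_fin.
rewrite -[X in _ <= X](int_cst1 (g2 w1 w2)).
apply: le_int_ge0 => // y2.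
by apply: integral_ge0 => x _; rewrite lee_fin.
Qed.

End J.

Lemma final_ineq (R : realType) (jB jA jE : \bar R) (eps c : R) :
  jB <= jA + jE -> jA <= eps%:E -> jE <= c%:E -> jB - c%:E <= eps%:E.
Proof.
move=> h hA hE; rewrite leeBlDr //; apply: le_trans h _; exact: leeD.
Qed.

Lemma get_elt (R : realType) d (T : measurableType d) (P : probability T R) :
  exists x : T, True.
Proof.
case: (pselect (exists x : T, True)) => // hn; exfalso.
have e : [set: T] = set0 by apply/seteqP; split => // x _; apply: hn; exists x.
have := probability_setT P; rewrite e measure0 => -[] /eqP.
by rewrite eq_sym oner_eq0.
Qed.

Local Close Scope ereal_scope.

Lemma pos_card (R : realType) (T : Type) (n : nat) (f : 'I_n -> T -> R) x :
  \sum_(w < n) f w x = 1 -> (0 < n)%N.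
Proof.
case: (pselect (exists w : 'I_n, True)) => [[w _]|hn] h.
  exact: leq_ltn_trans (leq0n _) (ltn_ord w).
move: h; rewrite big1 => [/eqP|i _]; last by exfalso; apply: hn; exists i.
by rewrite eq_sym oner_eq0.
Qed.

Lemma exp_form1 (R : realType) (b1x b2 ds lam a : R) : 0 < b1x -> 0 < b2 ->
  expR (- lam * ds) * b2 `^ a / b1x = expR (- lam * ds + (a * ln b2 - ln b1x)).
Proof.
move=> h1 h2; rewrite expRD expRB lnK ?posrE // -mulrA; congr (_ * (_ / _)).
by rewrite /powR gt_eqF.
Qed.

Lemma F1_form (R : realType) (b1x b2 lam dd a : R) : 0 < b1x -> 0 < b2 ->
  ln (b2 `^ a / b1x) - lam * dd = a * ln b2 - ln b1x - lam * dd.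
Proof. by move=> h1 h2; rewrite ln_div ?posrE ?powR_gt0 // ln_powR. Qed.

Lemma exp_form2 (R : realType) (b1x b2 d1 d2 lam l2 b : R) : 0 < b1x -> 0 < b2 ->
  expR (- lam * d1 - l2 * d2) / (b1x * b2 `^ b) =
  expR (- lam * d1 - l2 * d2 + (- b * ln b2 - ln b1x)).
Proof.
move=> h1 h2; rewrite [in RHS]expRD; congr (_ * _).
rewrite (_ : - b * ln b2 - ln b1x = - (ln b1x + b * ln b2)); last by rewrite mulNr; lra.
by rewrite expRN expRD lnK ?posrE // /powR gt_eqF.
Qed.

Lemma F2_form (R : realType) (b1x b2 lam l2 d1 d2 b : R) : 0 < b1x -> 0 < b2 ->
  ln (b2 `^ (- b) / b1x) - lam * d1 - l2 * d2 = - b * ln b2 - ln b1x - lam * d1 - l2 * d2.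
Proof. by move=> h1 h2; rewrite ln_div ?posrE ?powR_gt0 // ln_powR. Qed.

Lemma key_ineq (R : realType) (X Y m g : R) : 0 < m -> ln m + g <= Y -> Y <= X ->
  1 <= (m * expR g)^-1 * expR X.
Proof.
move=> m0 h1 h2.
have -> : m * expR g = expR (ln m + g) by rewrite expRD lnK ?posrE.
rewrite -expRN -expRD -[1]expR0 ler_expR; lra.
Qed.

Unset Implicit Arguments.
Set Strict Implicit.

Theorem mainTheorem5 (R : realType) (d dy1 dy2 : measure_display)
  (TX : measurableType d) (TY1 : measurableType dy1) (TY2 : measurableType dy2)
  (PX : probability TX R)
  (ds1 : TX * TY1 -> R) (ds2 : TX * TY2 -> R)
  (beta1 : TX -> R) (beta2 : TX * TY1 -> R)
  (lam1 lam2 nu1 : R)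
  (M1 M2 : nat) (dd1 dd2 eps1 eps2 : R)
  (f1 : 'I_M1 -> TX -> R) (f2 : 'I_M1 -> 'I_(M2 %/ M1) -> TX -> R)
  (g1 : 'I_M1 -> probability TY1 R) (g2 : 'I_M1 -> 'I_(M2 %/ M1) -> probability TY2 R)
  (* distortion measures and parameters *)
  (hds1m : measurable_fun setT ds1) (hds2m : measurable_fun setT ds2)
  (hds1 : forall p, 0 <= ds1 p) (hds2 : forall p, 0 <= ds2 p)
  (hb1m : measurable_fun setT beta1) (hb2m : measurable_fun setT beta2)
  (hb1 : forall x, 0 < beta1 x) (hb2 : forall p, 0 < beta2 p)
  (hlam1 : 0 <= lam1) (hlam2 : 0 <= lam2) (hnu1 : 0 <= nu1)
  (hS1 : forall y1, (Sigma1 PX ds1 beta1 beta2 lam1 nu1 y1 <= 1)%E)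
  (hS2 : forall y1 y2, (Sigma2 PX ds1 ds2 beta1 beta2 lam1 lam2 nu1 y1 y2 <= 1)%E)
  (* randomized encoders: measurable stochastic kernels into finite sets *)
  (hf1m : forall w1, measurable_fun setT (f1 w1))
  (hf1 : forall w1 x, 0 <= f1 w1 x) (hf1s : forall x, \sum_(w1 < M1) f1 w1 x = 1)
  (hf2m : forall w1 w2, measurable_fun setT (f2 w1 w2))
  (hf2 : forall w1 w2 x, 0 <= f2 w1 w2 x)
  (hf2s : forall w1 x, \sum_(w2 < M2 %/ M1) f2 w1 w2 x = 1)
  (* excess-distortion probabilities *)
  (hA1 : (joint_prob PX f1 f2 g1 g2
            [set p : TX * TY1 * TY2 | ~ (ds1 (p.1.1, p.1.2) <= dd1)%R] <= eps1%:E)%E)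
  (hA2 : (joint_prob PX f1 f2 g1 g2
            [set p : TX * TY1 * TY2 | ~ ((ds1 (p.1.1, p.1.2) <= dd1)%R /\ (ds2 (p.1.1, p.2) <= dd2)%R)]
            <= eps2%:E)%E)
  (gam1 gam2 : R) (hg1 : 0 < gam1) (hg2 : 0 < gam2) :
  (eps1%:E >= joint_prob PX f1 f2 g1 g2
       [set p : TX * TY1 * TY2 | (F1 beta1 beta2 lam1 nu1 dd1 p.1.1 p.1.2 >= ln M1%:R + gam1)%R]
     - (expR (- gam1))%:E)%E /\
  (eps2%:E >= joint_prob PX f1 f2 g1 g2
       [set p : TX * TY1 * TY2 | (F2 beta1 beta2 lam1 lam2 nu1 dd1 dd2 p.1.1 p.1.2 >= ln M2%:R + gam2)%R]
     - (expR (- gam2))%:E)%E.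
Proof.
have [x0 _] := get_elt PX.
have M1pos := pos_card (hf1s x0).
have Kpos := pos_card (hf2s (Ordinal M1pos) x0).
have M1K : (M1%:R * (M2 %/ M1)%:R <= M2%:R :> R).
  by rewrite -natrM ler_nat mulnC leq_trunc_div.
have M2pos : (0 < M2)%N.
  by apply: leq_trans (leq_trunc_div M2 M1); rewrite muln_gt0 Kpos M1pos.
have hnu : 0 < 1 + nu1 by lra.
have hlam : 0 <= lam1 / (1 + nu1) by rewrite divr_ge0 // ltW.
have mfst2 : measurable_fun setT (fun p : TX * TY1 * TY2 => p.1.1).
  exact: (measurableT_comp measurable_fst measurable_fst).
have mg1 : measurable_fun setT (fun p : TX * TY1 * TY2 => ds1 (p.1.1, p.1.2)).
  apply: (measurableT_comp hds1m); apply: measurable_fun_pair => //.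
  exact: (measurableT_comp measurable_snd measurable_fst).
have mg2 : measurable_fun setT (fun p : TX * TY1 * TY2 => ds2 (p.1.1, p.2)).
  exact: (measurableT_comp hds2m (measurable_fun_pair mfst2 measurable_snd)).
have mlt (g : TX * TY1 * TY2 -> R) (c : R) : measurable_fun setT g ->
    measurable [set p | ~ (g p <= c)].
  move=> mg.
  rewrite (_ : [set p | ~ (g p <= c)] = g @^-1` `]c, +oo[).
    by rewrite -[X in measurable X]setTI; apply: mg => //; exact: measurable_itv.
  apply/seteqP; split => p /=; rewrite in_itv /= andbT.
    by move=> h; rewrite ltNge; apply/negP.
  by rewrite ltNge => /negP.
split.
-
  pose c1 := (M1%:R * expR gam1)^-1.
  have c1pos : 0 < c1 by rewrite invr_gt0 mulr_gt0 // ?ltr0n // expR_gt0.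
  pose X1 := fun q : TX * TY1 => - (lam1 / (1 + nu1)) * ds1 q +
     (1 / (1 + nu1) * ln (beta2 q) - ln (beta1 q.1)).
  have mX1 : measurable_fun setT X1.
    apply: measurable_funD; first exact: (measurable_funM (measurable_cst _) hds1m).
    apply: measurable_funB.
      exact: (measurable_funM (measurable_cst _) (measurableT_comp (@measurable_ln R) hb2m)).
    exact: (measurableT_comp (@measurable_ln R) (measurableT_comp hb1m measurable_fst)).
  pose e1 := fun q => c1 * expR (X1 q).
  have me1 : measurable_fun setT e1.
    exact: (measurable_funM (measurable_cst c1) (measurableT_comp (@measurable_expR R) mX1)).
  have e10 q : 0 <= e1 q by rewrite mulr_ge0 ?expR_ge0 // ltW.
  have hbd1 y1 : (\int[PX]_x (e1 (x, y1))%:E <= c1%:E)%E.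
    rewrite (_ : (fun x => (e1 (x, y1))%:E) = fun x => (c1%:E * (expR (X1 (x, y1)))%:E)%E);
      last by apply: funext => x; rewrite EFinM.
    rewrite ge0_integralZl_EFin //; try (by move=> x _; rewrite lee_fin expR_ge0);
      try (by apply: ltW);
      try (by apply/measurable_EFinP; apply: (measurableT_comp (@measurable_expR R));
      exact: (measurable_fun_pair1 y1 mX1)).
    rewrite -[X in (_ <= X)%E]mule1; apply: lee_wpmul2l; first by rewrite lee_fin ltW.
    apply: le_trans (hS1 y1); rewrite le_eqVlt; apply/orP; left; apply/eqP.
    rewrite /Sigma1; apply: eq_integral => x _; rewrite exp_form1 //.
  pose A1c := [set p : TX * TY1 * TY2 | ~ (ds1 (p.1.1, p.1.2) <= dd1)].
  pose B1 := [set p : TX * TY1 * TY2 |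
     (F1 beta1 beta2 lam1 nu1 dd1 p.1.1 p.1.2 >= ln M1%:R + gam1)].
  have mA1c : measurable A1c by exact: (mlt _ _ mg1).
  have key p : \1_B1 p <= \1_A1c p + e1 p.1.
    move: p => [[x y1] y2]; rewrite !indicE.
    case: (pselect (A1c (x, y1, y2))) => hA.
      rewrite (mem_set hA); apply: (@le_trans _ _ 1).
        by case: (_ \in _) => //=; rewrite ler01.
      by rewrite lerDl.
    rewrite (memNset hA) add0r.
    case: (pselect (B1 (x, y1, y2))) => hB; last by rewrite (memNset hB).
    rewrite (mem_set hB).
    have hd : ds1 (x, y1) <= dd1 by apply/negPn/negP => h; apply: hA => /=; exact/negP.
    move: hB; rewrite /B1 /= /F1 F1_form // => hB.
    apply: (key_ineq _ hB); first by rewrite ltr0n.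
    have : lam1 / (1 + nu1) * ds1 (x, y1) <= lam1 / (1 + nu1) * dd1 by rewrite ler_wpM2l.
    rewrite /X1 /= !mulNr; lra.
  have H1 := J_sub PX g1 g2 hf1m hf1 hf2m hf2 (h := \1_B1)
    (fun p => ler0n _ _) (measurable_indic mA1c) (fun p => ler0n _ _)
    (measurableT_comp me1 measurable_fst) (fun p => e10 p.1) key.
  have Hb1 := J_bound1 g1 g2 hf1 hf2 hf1s hf2s me1 e10 hbd1.
  have E1 : M1%:R * c1 = expR (- gam1).
    rewrite expRN /c1 invfM mulrA divff ?mul1r //.
    by rewrite pnatr_eq0 -lt0n.
  rewrite E1 in Hb1.
  exact: (final_ineq H1 hA1 Hb1).
-
  pose c2 := (M2%:R * expR gam2)^-1.
  have c2pos : 0 < c2 by rewrite invr_gt0 mulr_gt0 // ?ltr0n // expR_gt0.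
  pose X2 := fun p : TX * TY1 * TY2 => - (lam1 / (1 + nu1)) * ds1 p.1 - lam2 * ds2 (p.1.1, p.2) +
     (- (nu1 / (1 + nu1)) * ln (beta2 p.1) - ln (beta1 p.1.1)).
  have mX2 : measurable_fun setT X2.
    apply: measurable_funD.
      apply: measurable_funB.
        exact: (measurable_funM (measurable_cst _) (measurableT_comp hds1m measurable_fst)).
      exact: (measurable_funM (measurable_cst _) mg2).
    apply: measurable_funB.
      exact: (measurable_funM (measurable_cst _)
         (measurableT_comp (@measurable_ln R) (measurableT_comp hb2m measurable_fst))).
    exact: (measurableT_comp (@measurable_ln R) (measurableT_comp hb1m mfst2)).
  pose e2 := fun q => c2 * expR (X2 q).
  have me2 : measurable_fun setT e2.
    exact: (measurable_funM (measurable_cst c2) (measurableT_comp (@measurable_expR R) mX2)).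
  have e20 q : 0 <= e2 q by rewrite mulr_ge0 ?expR_ge0 // ltW.
  have hbd2 y1 y2 : (\int[PX]_x (e2 (x, y1, y2))%:E <= c2%:E)%E.
    rewrite (_ : (fun x => (e2 (x, y1, y2))%:E) =
       fun x => (c2%:E * (expR (X2 (x, y1, y2)))%:E)%E);
      last by apply: funext => x; rewrite EFinM.
    rewrite ge0_integralZl_EFin //; try (by move=> x _; rewrite lee_fin expR_ge0);
      try (by apply: ltW);
      try (by apply/measurable_EFinP; apply: (measurableT_comp (@measurable_expR R));
      exact: (measurable_fun_pair1 y1 (measurable_fun_pair1 y2 mX2))).
    rewrite -[X in (_ <= X)%E]mule1; apply: lee_wpmul2l; first by rewrite lee_fin ltW.
    apply: le_trans (hS2 y1 y2); rewrite le_eqVlt; apply/orP; left; apply/eqP.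
    rewrite /Sigma2; apply: eq_integral => x _; rewrite exp_form2 //.
  pose A2c := [set p : TX * TY1 * TY2 |
     ~ ((ds1 (p.1.1, p.1.2) <= dd1) /\ (ds2 (p.1.1, p.2) <= dd2))].
  pose B2 := [set p : TX * TY1 * TY2 |
     (F2 beta1 beta2 lam1 lam2 nu1 dd1 dd2 p.1.1 p.1.2 >= ln M2%:R + gam2)].
  have mA2c : measurable A2c.
    rewrite (_ : A2c = [set p | ~ (ds1 (p.1.1, p.1.2) <= dd1)] `|`
                       [set p | ~ (ds2 (p.1.1, p.2) <= dd2)]).
      by apply: measurableU; [exact: (mlt _ _ mg1) | exact: (mlt _ _ mg2)].
    apply/seteqP; split => p /=.
      by move=> h; apply/not_andP.
    by move=> h; apply/not_andP.
  have key p : \1_B2 p <= \1_A2c p + e2 p.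
    move: p => [[x z1] z2]; rewrite !indicE.
    case: (pselect (A2c (x, z1, z2))) => hA.
      rewrite (mem_set hA); apply: (@le_trans _ _ 1).
        by case: (_ \in _) => //=; rewrite ler01.
      by rewrite lerDl.
    rewrite (memNset hA) add0r.
    case: (pselect (B2 (x, z1, z2))) => hB; last by rewrite (memNset hB).
    rewrite (mem_set hB).
    have [hd1 hd2] : ds1 (x, z1) <= dd1 /\ ds2 (x, z2) <= dd2.
      by apply: contrapT => h; apply: hA.
    move: hB; rewrite /B2 /= /F2 F2_form // => hB.
    apply: (key_ineq _ hB); first by rewrite ltr0n.
    have : lam1 / (1 + nu1) * ds1 (x, z1) <= lam1 / (1 + nu1) * dd1 by rewrite ler_wpM2l.
    have : lam2 * ds2 (x, z2) <= lam2 * dd2 by rewrite ler_wpM2l.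
    rewrite /X2 /= !mulNr; lra.
  have H2 := J_sub PX g1 g2 hf1m hf1 hf2m hf2 (h := \1_B2)
    (fun p => ler0n _ _) (measurable_indic mA2c) (fun p => ler0n _ _)
    me2 e20 key.
  have Hb2 := J_bound2 g1 g2 hf1 hf2 hf1s hf2s me2 e20 hbd2.
  have Hb2' : (J PX f1 f2 g1 g2 e2 <= (expR (- gam2))%:E)%E.
    apply: le_trans Hb2 _; rewrite lee_fin.
    have -> : expR (- gam2) = M2%:R * c2.
      rewrite expRN /c2 invfM mulrA divff ?mul1r //.
      by rewrite pnatr_eq0 -lt0n.
    by rewrite ler_wpM2r // ltW.
  exact: (final_ineq H2 hA2 Hb2').
Qed.
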